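(* Let $G=G_{\mathbf E}$ be a multi-GGS group which is not the constant GGS group. Then every element of $N(B)$ fixes the vertex $0$, and $$N(B)|_0\subseteq N(B),\qquad C(B)|_0\subseteq C(B),$$ where $N(B),C(B)$ are the normaliser and centraliser of $B$ in $\mathrm{Aut}(X^* )$ and $S|_0=\{g|_0\mid g\in S\}$.
   Context: Let $p$ be an odd prime and $X=\{0,1,\dots,p-1\}$, identified with $\mathbb F_p$. $X^*$ is the $p$-regular rooted tree of finite words over $X$; $\mathrm{Aut}(X^* )$ acts on the right. Sections $g|_v$ are defined by $(vw)^g=v^g\,w^{g|_v}$. $\mathrm{Stab}(1)$ is the stabiliser of all one-letter words and $\psi_1\colon\mathrm{Stab}(1)\to\mathrm{Aut}(X^* )^p$, $g\mapsto(g|_0,\dots,g|_{p-1})$, is an isomorphism. Let $a$ be the rooted automorphism acting as $\sigma=(0\,1\,\cdots\,p-1)$ on the first letter and trivially on the remaining letters. Let $\mathbf E\le\mathbb F_p^{p-1}$ be a subspace of dimension $r\ge1$; $E$ is the $r\times(p-1)$ matrix whose rows form a fixed basis of $\mathbf E$, with columns $\mathbf e_1,\dots,\mathbf e_{p-1}$. For $\mathbf n\in\mathbb F_p^r$, $b^{\mathbf n}\in\mathrm{Stab}(1)$ is the unique automorphism with $\psi_1(b^{\mathbf n})=(b^{\mathbf n},a^{\mathbf n\cdot\mathbf e_1},\dots,a^{\mathbf n\cdot\mathbf e_{p-1}})$; $B=\{b^{\mathbf n}\mid\mathbf n\in\mathbb F_p^r\}$. $G_{\mathbf E}$ is generated by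 $a$ and $B$; it is the constant GGS group if $\mathbf E=\{(\lambda,\dots,\lambda)\mid\lambda\in\mathbb F_p\}$. *)

(* Defs.v *)
From HB Require Import structures.
From mathcomp Require Import all_boot all_order all_algebra.
Set Implicit Arguments. Unset Strict Implicit. Unset Printing Implicit Defensive.
Import GRing.Theory.
Local Open Scope ring_scope.

Definition word (p : nat) := seq 'F_p.

(* A tree automorphism acting on the right: w^g is written (g w). *)
Definition is_aut (p : nat) (g : word p -> word p) : Prop :=
  [/\ (forall w, size (g w) = size w),
      (forall v w, take (size v) (g (v ++ w)) = g v)
    & bijective g].

(* Section g|_v : (v w)^g = v^g w^{g|_v}. *)
Definition section (p : nat) (g : word p -> word p) (v : word p) : word p -> word p :=
  fun w => drop (size v) (g (v ++ w)).

Definition a_pow (p : nat) (k : 'F_p) (w : word p) : word p :=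
  match w with [::] => [::] | y :: w' => (y + k) :: w' end.

(* n . e_x for a letter x <> 0 (column e_x is column x-1 of E) *)
Definition exponent (p r : nat) (E : 'M['F_p]_(r, p.-1)) (n : 'rV['F_p]_r)
  (x : 'F_p) : 'F_p :=
  match insub (nat_of_ord x).-1 : option 'I_(p.-1) with
  | Some j => (n *m E) 0 j
  | None => 0
  end.

(* b^n : psi_1(b^n) = (b^n, a^{n.e_1}, ..., a^{n.e_{p-1}}) *)
Fixpoint b_act (p r : nat) (E : 'M['F_p]_(r, p.-1)) (n : 'rV['F_p]_r)
  (w : word p) : word p :=
  match w with
  | [::] => [::]
  | x :: w' => if x == 0 then x :: b_act E n w' else x :: a_pow (exponent E n x) w'
  end.

(* Normaliser of B = {b^n} in Aut(X^* ):  B^g = B  (g^{-1} b^n g = b^m,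
   i.e. b^n then g equals g then b^m, as functions on words) *)
Definition in_normaliser (p r : nat) (E : 'M['F_p]_(r, p.-1))
  (g : word p -> word p) : Prop :=
  is_aut g /\
  (forall n, exists m, forall w, b_act E m (g w) = g (b_act E n w)) /\
  (forall m, exists n, forall w, b_act E m (g w) = g (b_act E n w)).

Definition in_centraliser (p r : nat) (E : 'M['F_p]_(r, p.-1))
  (g : word p -> word p) : Prop :=
  is_aut g /\ (forall n w, b_act E n (g w) = g (b_act E n w)).

(* the constant GGS subspace {(l,...,l)} *)
Definition constant_space (p : nat) : 'M['F_p]_(1, p.-1) := const_mx 1.

(* Main.v *)
Require Import Defs.
From mathcomp Require Import all_boot all_order all_algebra.
From mathcomp Require Import zify.
Local Open Scope ring_scope.
Import GRing.Theory.

Section Aux.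
Variables (p r : nat) (E : 'M['F_p]_(r, p.-1)).

Lemma b_act0 n (w : word p) : b_act E n (0 :: w) = 0 :: b_act E n w.
Proof. by simpl; rewrite ?eqxx. Qed.

Lemma aut_inj (g : word p -> word p) : is_aut g -> injective g.
Proof. by case=> _ _ /bij_inj. Qed.

Lemma aut_head (g : word p -> word p) w : is_aut g -> g [:: 0] = [:: 0] ->
  g (0 :: w) = 0 :: section g [:: 0] w.
Proof.
case=> Hs Hp _ H0; rewrite /section /=.
have := Hp [:: 0] w; rewrite /= H0 => Ht.
by rewrite -{1}(cat_take_drop 1 (g (0 :: w))) Ht.
Qed.

Lemma section_aut (g : word p -> word p) : is_aut g -> g [:: 0] = [:: 0] ->
  is_aut (section g [:: 0]).
Proof.
move=> Ha H0; have Hh w := aut_head g w Ha H0.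
have Hinj := aut_inj g Ha.
case: (Ha) => Hs Hp [gi gK giK].
split.
- by move=> w; rewrite /section size_drop Hs /= subn1.
- move=> v w.
  have := Hp (0 :: v) w; rewrite /= (Hh (v ++ w)) (Hh v) /=.
  by case.
- have Hgi : forall w, gi (0 :: w) = 0 :: drop 1 (gi (0 :: w)).
    move=> w; case Ev: (gi (0 :: w)) => [|v0 v'].
      by have := giK (0 :: w); rewrite Ev; move/(congr1 size); rewrite Hs.
    have := Hp [:: v0] v'; rewrite /= -Ev giK /= => Hv.
    have : g [:: v0] = g [:: 0] by rewrite H0 -Hv take0.
    by move/Hinj => [E0]; rewrite Ev E0 /= drop0.
  exists (fun w => drop 1 (gi (0 :: w))).
  + move=> w /=; by rewrite -Hh gK /= drop0.
  + move=> w /=; by rewrite /section /= -Hgi giK /= drop0.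
Qed.

Lemma section_comm (g : word p -> word p) n m : is_aut g -> g [:: 0] = [:: 0] ->
  (forall w, b_act E m (g w) = g (b_act E n w)) ->
  forall w, b_act E m (section g [:: 0] w) = section g [:: 0] (b_act E n w).
Proof.
move=> Ha H0 Hc w.
have := Hc (0 :: w).
rewrite b_act0 (aut_head g (b_act E n w) Ha H0) (aut_head g w Ha H0) b_act0.
by case.
Qed.

Lemma fix0 (g : word p -> word p) : prime p -> (0 < r)%N -> row_free E ->
  is_aut g -> (forall n, exists m, forall w, b_act E m (g w) = g (b_act E n w)) ->
  g [:: 0] = [:: 0].
Proof.
move=> pr r0 rf Ha Hn.
have Hinj := aut_inj g Ha.
case: (Ha) => Hs Hp _.
have : size (g [:: 0]) = 1%N by rewrite Hs.
case Eg: (g [:: 0]) => [|c [|]] // _.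
case: (eqVneq c 0) => [-> //|cn0].
have E0 : E != 0.
  apply/eqP => E0; move: rf; rewrite /row_free E0 mxrank0.
  by move/eqP => h; move: r0; rewrite -h.
have : [exists ij : 'I_r * 'I_p.-1, E ij.1 ij.2 != 0].
  move: E0; apply: contraR; rewrite negb_exists => /forallP H.
  apply/eqP/matrixP => i j; rewrite mxE; apply/eqP.
  by have := H (i, j); rewrite negbK.
case/existsP => -[i j] /= Eij.
set n : 'rV['F_p]_r := delta_mx 0 i.
have nE : (n *m E) 0 j = E i j by rewrite -rowE mxE.
have hp : (j.+1 < (Zp_trunc (pdiv p)).+2)%N.
  rewrite Fp_cast //; have := ltn_ord j; have := prime_gt0 pr; move: (nat_of_ord j) => k; lia.
set x : 'F_p := inord j.+1.
have xv : nat_of_ord x = j.+1 by rewrite /x inordK.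
have xn0 : (x == 0) = false.
  by apply/negbTE; apply/eqP => /(congr1 (@nat_of_ord _)); rewrite xv.
have ex : exponent E n x = E i j.
  rewrite /exponent xv /=.
  by rewrite (insubT (fun k => k < p.-1)%N (ltn_ord j)) /= -nE; congr ((n *m E) 0 _); apply: val_inj.
have [m Hm] := Hn n.
set w1 : word p := [:: 0; x; 0].
set w2 : word p := [:: 0; x; E i j].
have Hb : b_act E n w1 = w2 by rewrite /w1 /w2 /= ?eqxx xn0 ex add0r.
have Hm1 := Hm w1; rewrite Hb in Hm1.
have s1 : size (g w1) = 3%N by rewrite Hs.
have t1 : take 2 (g w1) = g [:: 0; x] by rewrite -(Hp [:: 0; x] [:: 0]).
have t2 : take 2 (g w2) = g [:: 0; x] by rewrite -(Hp [:: 0; x] [:: E i j]).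
have h1 : take 1 (g w1) = [:: c] by rewrite -Eg -(Hp [:: 0] [:: x; 0]).
move: Hm1 t1 t2 h1 s1.
case Eg1: (g w1) => [|s0 [|s1 [|s2 []]]] //= Hm1 t1 t2 [Es0] _.
subst s0; rewrite (negbTE cn0) /= in Hm1.
rewrite -Hm1 -t1 /= in t2; case: t2 => Ee.
rewrite Ee in Hm1.
have : w1 = w2 by apply: Hinj; rewrite Eg1 Hm1.
by case => /eqP; rewrite eq_sym (negbTE Eij).
Qed.

End Aux.

Theorem mainTheorem6 (p r : nat) (E : 'M['F_p]_(r, p.-1)) :
  prime p -> odd p -> (0 < r)%N -> row_free E ->
  ~~ (E == constant_space p)%MS ->
  (forall g, in_normaliser E g -> g [:: 0] = [:: 0]) /\
  (forall g, in_normaliser E g -> in_normaliser E (section g [:: 0])) /\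
  (forall g, in_centraliser E g -> in_centraliser E (section g [:: 0])).
Proof.
move=> pr _ r0 rf _.
have F0 : forall g, in_normaliser E g -> g [:: 0] = [:: 0].
  by move=> g [Ha [Hn _]]; exact: (@fix0 p r E g pr r0 rf Ha Hn).
split => //; split.
- move=> g Hg; have H0 := F0 g Hg; case: Hg => [Ha [Hn Hm]].
  split; first exact: section_aut.
  split.
  + by move=> n; have [m Hm'] := Hn n; exists m; exact: (@section_comm p r E g _ _ Ha H0 Hm').
  + by move=> m; have [n Hn'] := Hm m; exists n; exact: (@section_comm p r E g _ _ Ha H0 Hn').
- move=> g [Ha Hc].
  have H0 : g [:: 0] = [:: 0].
    by apply: F0; split => //; split => n; exists n; apply: Hc.
  split; first exact: section_aut.
  by move=> n; exact: (@section_comm p r E g _ _ Ha H0 (Hc n)).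
Qed.
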